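(* Let $k\ge1$ and $\epsilon$ with $0\le\epsilon\le1/2$, and assume $m^{\epsilon}\le\sqrt n$. Any deterministic coverage oracle that stores a datastructure of at most $b=nm^{1-2\epsilon}$ bits does not attain an approximation ratio of $O\!\left(\frac{m^{\epsilon-\delta}}{k\sqrt k}\right)$ for any constant $\delta>0$.
   Context: A set system with $n$ items and $m$ sets is a pair $(\mathcal X,\mathcal I)$ with $\mathcal X=\{1,\dots,n\}$ and $\mathcal I$ an indexed family of $m$ subsets of $\mathcal X$. For $k\ge1$ and a query $Q\subseteq\mathcal X$, $OPT(k,\mathcal X,\mathcal I,Q)=\max\{|(\bigcup_{S\in\mathcal J}S)\cap Q| : \mathcal J\subseteq\mathcal I,|\mathcal J|\le k\}$. A deterministic coverage oracle consists of a deterministic static stage mapping $(n,m,k,(\mathcal X,\mathcal I))$ to a bit string $\mathcal D$ (the datastructure), and a deterministic dynamic stage mapping $(\mathcal D,Q)$, for $Q\subseteq\mathcal X$, to (indices of) $\mathcal J\subseteq\mathcal I$ with $|\mathcal J|\le k$, without access to $(\mathcal X,\mathcal I)$; $\mathcal A(k,\mathcal X,\mathcal I,Q)=|(\bigcup_{S\in\mathcal J}S)\cap Q|$. The approximation ratio is $\max OPT/\mathcal A$ over all set systems with $n$ items and $m$ sets and all queries $Q$. No computational restrictions are assumed. *)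

(* Defs.v *)
From mathcomp Require Import all_boot.
From Stdlib Require Import Reals.

Set Implicit Arguments.
Unset Strict Implicit.
Unset Printing Implicit Defensive.

Definition set_system (n m : nat) := 'I_m -> {set 'I_n}.

Definition coverage (n m : nat) (I : set_system n m) (Q : {set 'I_n})
  (J : {set 'I_m}) : nat :=
  #|(\bigcup_(j in J) I j) :&: Q|.

Definition OPT (n m : nat) (k : nat) (I : set_system n m) (Q : {set 'I_n}) : nat :=
  \max_(J : {set 'I_m} | #|J| <= k) coverage I Q J.

(* Main.v *)
From Stdlib Require Import Reals Lra Lia ZArith.
Require Import Defs.
From mathcomp Require Import all_boot all_algebra all_fingroup.
Delimit Scope R_scope with R.
Delimit Scope nat_scope with N.
Delimit Scope Z_scope with Z.
Set Implicit Arguments. Unset Strict Implicit. Unset Printing Implicit Defensive.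

Section CodeSec.
Import GRing.Theory.

Section Code.
Local Open Scope ring_scope.
Variable F : finFieldType.

Lemma code_exists (d m : nat) (Hm : (m <= #|{: d.+1.-tuple F}|)%N) :
  exists c : 'I_m -> {set 'I_#|{: F * F}|},
   (forall t, #|c t| = #|F|) /\ (forall u t, u != t -> (#|c u :&: c t| <= d)%N).
Proof.
pose tup (t : 'I_m) : d.+1.-tuple F := enum_val (widen_ord Hm t).
pose P t : {poly F} := Poly (tup t).
exists (fun t => [set enum_rank (x, (P t).[x]) | x : F]); split.
  move=> t; rewrite card_imset //.
  by move=> x y /enum_rank_inj [].
move=> u t ne.
have nz : P u - P t != 0.
  rewrite subr_eq0; apply: contra ne => /eqP eqP'.
  have : tup u = tup t.
    apply: eq_from_tnth => i.
    rewrite !(tnth_nth 0).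
    have := congr1 (fun q : {poly F} => q`_i) eqP'.
    rewrite /P !coef_Poly. done.
  move/enum_val_inj. move/(congr1 val). simpl.
  move=> h. apply/eqP. apply: val_inj. exact h.
have sz : leq (size (P u - P t)) d.+1.
  apply: leq_trans (size_polyD _ _) _; rewrite size_polyN geq_max.
  by rewrite !(leq_trans (size_Poly _)) // size_tuple.
pose rs := enum (root (P u - P t)).
have := max_poly_roots nz (rs := rs).
rewrite enum_uniq => /(_ _ isT) => H.
have Hr : leq #|root (P u - P t)| d.
  rewrite cardE -ltnS (leq_trans _ sz) // H //.
  by apply/allP => x; rewrite mem_enum.
apply: leq_trans Hr.
apply: leq_trans (leq_imset_card (fun x => enum_rank (x, (P u).[x])) _).
apply: subset_leq_card; apply/subsetP => z /setIP [/imsetP [x _ ->] /imsetP [y _]].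
move/enum_rank_inj => [<- e]; apply/imsetP; exists x => //.
by rewrite unfold_in /root hornerD hornerN e subrr.
Qed.
End Code.

End CodeSec.

Local Open Scope nat_scope.

Lemma foldr_mul_le (T : Type) (f : T -> nat) (k : nat) (s : seq T) :
  (forall x, f x <= k) -> foldr muln 1 (map f s) <= k ^ size s.
Proof.
move=> H; elim: s => [|x s IH] //=.
by rewrite expnS leq_mul.
Qed.

Lemma card_bigcup_le (n m : nat) (J : {set 'I_m}) (F : 'I_m -> {set 'I_n}) :
  #|\bigcup_(j in J) F j| <= \sum_(j in J) #|F j|.
Proof.
apply: (big_ind2 (fun (A : {set 'I_n}) (x : nat) => #|A| <= x)) => //.
  by rewrite cards0.
move=> A x B y HA HB; apply: leq_trans (leq_card_setU A B) _.
exact: leq_add.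
Qed.

Definition enc (B : nat) (x : seq bool) : ('I_B.+1 * {ffun 'I_B -> bool})%type :=
  (inord (size x), [ffun i : 'I_B => nth false x i]).

Lemma enc_inj (B : nat) (x y : seq bool) :
  size x <= B -> size y <= B -> enc B x = enc B y -> x = y.
Proof.
move=> hx hy [] /(congr1 val); rewrite /= !inordK ?ltnS // => es ef.
apply: (eq_from_nth (x0 := false)) => // i hi.
have hiB : i < B by apply: leq_trans hi hx.
have := congr1 (fun f : {ffun 'I_B -> bool} => f (Ordinal hiB)) ef; rewrite !ffunE //.
Qed.

Lemma core (n m k B d s : nat) (c : 'I_m -> {set 'I_n})
  (Hk0 : 0 < k)
  (Hs : forall t, #|c t| = s)
  (Hc : forall u t, u != t -> #|c u :&: c t| <= d)
  (Hcount : B.+1 * 2 ^ B * k ^ m < m`!)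
  (static : set_system n m -> seq bool)
  (dynamic : seq bool -> {set 'I_n} -> {set 'I_m})
  (Hk : forall I Q, #|dynamic (static I) Q| <= k)
  (HB : forall I, size (static I) <= B) :
  exists I Q, coverage I Q (dynamic (static I) Q) <= k * d /\ s <= OPT k I Q.
Proof.
pose Is (sg : {perm 'I_m}) : set_system n m := fun j => c (sg j).
have [/existsP [sg /existsP [t Ht]] | Hall] :=
  boolP [exists sg : {perm 'I_m}, exists t : 'I_m,
           ((sg^-1)%g t) \notin dynamic (static (Is sg)) (c t)].
  exists (Is sg), (c t); split.
    set J := dynamic _ _ in Ht *.
    rewrite /coverage.
    apply: (@leq_trans #|\bigcup_(j in J) (Is sg j :&: c t)|).
      apply: subset_leq_card; apply/subsetP => z /setIP [/bigcupP [j jJ zj] zt].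
      by apply/bigcupP; exists j => //; rewrite inE zj zt.
    apply: leq_trans (card_bigcup_le _ _) _.
    apply: (@leq_trans (\sum_(j in J) d)).
      apply: leq_sum => j jJ; apply: Hc.
      apply: contraNneq Ht => <-; by rewrite permK.
    by rewrite sum_nat_const leq_mul2r Hk orbT.
  rewrite /OPT.
  have h1 : #|[set (sg^-1)%g t]| <= k by rewrite cards1.
  apply: (leq_trans _ (@leq_bigmax_cond _ (fun J : {set 'I_m} => #|J| <= k) (coverage (Is sg) (c t)) _ h1)).
  by rewrite /coverage big_set1 /Is permKV setIid Hs.
exfalso; move: Hcount; apply/negP; rewrite -leqNgt.
pose g sg := enc B (static (Is sg)).
rewrite -card_Sn -sum1_card.
rewrite (partition_big g xpredT) //=.
apply: (@leq_trans (\sum_(e : ('I_B.+1 * {ffun 'I_B -> bool})%type) k ^ m)).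
  apply: leq_sum => e _.
  have -> : \sum_(i | true && (g i == e)) 1 = #|[set sg | g sg == e]|.
    by rewrite -sum1_card; apply: eq_bigl => sg; rewrite inE.
  case: (set_0Vmem [set sg | g sg == e]) => [-> | [sg0 Hsg0]]; first by rewrite cards0.
  pose D0 := static (Is sg0).
  pose FF := fun t : 'I_m => [pred j | j \in dynamic D0 (c t)].
  have Hinj : {in [set sg | g sg == e] &, injective (fun sg : {perm 'I_m} => [ffun t => (sg^-1)%g t])}.
    move=> s1 s2 _ _ E; apply: invg_inj; apply/permP => t.
    by have := congr1 (fun f : {ffun 'I_m -> 'I_m} => f t) E; rewrite !ffunE.
  rewrite -(card_in_imset Hinj).
  apply: (@leq_trans #|(family FF : simpl_pred {ffun 'I_m -> 'I_m})|).
    apply: subset_leq_card; apply/subsetP => f /imsetP [sg Hsg ->].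
    apply/familyP => t; rewrite ffunE /FF inE.
    have eD : static (Is sg) = D0.
      apply: (enc_inj (HB _) (HB _)).
      by move: Hsg Hsg0; rewrite !inE /g => /eqP -> /eqP ->.
    rewrite -eD.
    move/existsPn: Hall => /(_ sg) /existsPn /(_ t).
    by rewrite negbK.
  rewrite card_family.
  rewrite /image_mem.
  have := @foldr_mul_le _ (fun t => #|FF t|) k (enum 'I_m).
  rewrite -cardE card_ord => H; apply: H => t.
  apply: leq_trans (Hk (Is sg0) (c t)); apply: subset_leq_card.
  by apply/subsetP => j; rewrite /FF !inE.
by rewrite sum_nat_const card_prod card_ord card_ffun card_ord card_bool.
Qed.


Lemma fact_ge (N j : nat) : N ^ j <= (N + j)`!.
Proof.
elim: j => [|j IH]; first by rewrite expn0 fact_gt0.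
rewrite addnS factS expnS leq_mul //.
by apply: leq_trans (leq_addr j N) _.
Qed.

Lemma leq_expb (a b n : nat) : a <= b -> a ^ n <= b ^ n.
Proof. by move=> h; elim: n => [|n IH] //; rewrite !expnS leq_mul. Qed.

Lemma fact_big (k : nat) : exists N, forall m, N <= m -> m.+2 * 2 ^ m.+1 * k ^ m < m`!.
Proof.
pose a := 4 * k.+1.
have a1 : 0 < a by [].
exists (2 * a + 4 * a ^ (2 * a)) => m Hm.
have H1 : m.+2 * 2 ^ m.+1 * k ^ m <= 4 * a ^ m.
  have h2 : m.+2 <= 2 ^ m.+1 by apply: ltn_expl.
  apply: (@leq_trans (2 ^ m.+1 * 2 ^ m.+1 * k.+1 ^ m)).
    by rewrite leq_mul // ?leq_mul // leq_expb.
  rewrite /a expnMn mulnA; apply: leq_mul => //.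
  have -> : 4 * 4 ^ m = 2 ^ (m.+1 + m.+1) by rewrite -expnS addnn -mul2n expnM.
  by rewrite expnD.
apply: leq_ltn_trans H1 _.
have hm : m = 2 * a + (m - 2 * a) by rewrite subnKC // (leq_trans _ Hm) // leq_addr.
set j := m - 2 * a in hm.
have hj : 4 * a ^ (2 * a) <= j by rewrite /j leq_subRL // (leq_trans _ Hm) // leq_addr.
apply: (@leq_trans ((2 * a) ^ j)); last by rewrite {1}hm; apply: fact_ge.
rewrite hm expnD mulnA expnMn ltn_pmul2r ?expn_gt0 ?a1 //.
apply: leq_ltn_trans hj _; exact: ltn_expl.
Qed.


Lemma INR_expn (p n : nat) : INR (expn p n) = (INR p ^ n)%R.
Proof.
elim: n => [|n IH]; first by rewrite expn0.
rewrite expnS -multE mult_INR IH /=. reflexivity.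
Qed.

Lemma floor_ex (x : R) : (0 <= x)%R -> exists m : nat, (INR m <= x < INR m + 1)%R.
Proof.
move=> hx.
have [h1 h2] := base_Int_part x.
have hz : (0 <= Int_part x)%Z.
  have : (-1 < IZR (Int_part x))%R by lra.
  move=> h; have : (-1 < Int_part x)%Z by apply: lt_IZR.
  lia.
exists (Z.to_nat (Int_part x)).
rewrite INR_IZR_INZ Z2Nat.id //; lra.
Qed.

Lemma big_pow (K d : R) : (0 < d)%R -> exists N : nat, forall m : nat, (N <= m)%N -> (K < Rpower (INR m) d)%R.
Proof.
move=> hd.
set X := (Rabs K + 1)%R.
have hX : (0 < X)%R by have := Rabs_pos K; rewrite /X; lra.
set Y := Rpower X (/ d).
have hY : (0 < Y)%R by rewrite /Y /Rpower; apply: exp_pos.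
have [h1 _] := archimed Y.
exists (Z.to_nat (up Y)) => m /leP hm.
have hu : (0 <= up Y)%Z by apply: le_IZR; lra.
have hmY : (Y < INR m)%R.
  apply: Rlt_le_trans h1 _.
  rewrite -(Z2Nat.id _ hu) -INR_IZR_INZ; exact: le_INR.
have : (Rpower Y d < Rpower (INR m) d)%R by apply: Rlt_Rpower_l; lra.
rewrite /Y Rpower_mult Rinv_l; last by lra.
rewrite Rpower_1 //.
have := Rle_abs K; rewrite /X; lra.
Qed.


Theorem mainTheorem9 (k : nat) (eps delta : R) :
  (1 <= k)%N -> (0 <= eps <= 1 / 2)%R -> (0 < delta)%R ->
  forall C : R, (0 < C)%R ->
  forall M0 : nat,
  exists n m : nat,
    (M0 <= m)%N /\
    (Rpower (INR m) eps <= sqrt (INR n))%R /\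
    forall (static : set_system n m -> seq bool)
           (dynamic : seq bool -> {set 'I_n} -> {set 'I_m}),
      (forall (I : set_system n m) (Q : {set 'I_n}),
          (#|dynamic (static I) Q| <= k)%N) ->
      (forall I : set_system n m,
          (INR (size (static I)) <= INR n * Rpower (INR m) (1 - 2 * eps))%R) ->
      exists (I : set_system n m) (Q : {set 'I_n}),
        (C * Rpower (INR m) (eps - delta) / (INR k * sqrt (INR k))
           * INR (coverage I Q (dynamic (static I) Q))
         < INR (OPT k I Q))%R.

Proof.
move=> hk [he0 he1] hd C hC M0.
have hkR : (1 <= INR k)%R by apply: (le_INR 1); apply/leP.
have hsk : (1 <= sqrt (INR k))%R by rewrite -sqrt_1; apply: sqrt_le_1_alt.
have [hepos | heq] : (0 < eps \/ eps = 0)%R by lra.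
-
  pose d := Z.to_nat (up (/ eps)).
  have hinv : (2 <= / eps)%R.
    have -> : (2 = / (1/2))%R by field.
    apply: Rinv_le_contravar => //; lra.
  have hdR : (/ eps < INR d)%R.
    have [h1 _] := archimed (/ eps).
    have hu : (0 <= up (/ eps))%Z by apply: le_IZR; lra.
    by rewrite /d INR_IZR_INZ Z2Nat.id.
  have [N1 HN1] := big_pow (C * INR d) hd.
  have [N2 HN2] := fact_big k.
  have [p hp pprime] := prime_above (maxn M0 (maxn N1 (maxn N2 1))).
  have hp1 : (1 <= INR p)%R.
    apply: (le_INR 1); apply/leP; exact: leq_trans hp.
  set x := Rpower (INR p) (/ eps).
  have hpx : (INR p <= x)%R.
    rewrite -{1}(Rpower_1 (INR p)); last lra.
    apply: Rle_Rpower => //; lra.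
  have hx0 : (0 <= x)%R by lra.
  have [m [hm1 hm2]] := floor_ex hx0.
  have hpm : (p <= m)%N.
    have : (INR p < INR m.+1)%R by rewrite S_INR; lra.
    by move/INR_lt/ltP.
  have hNm : (maxn M0 (maxn N1 (maxn N2 1)) < m)%N := leq_trans hp hpm.
  have hM0 : (M0 <= m)%N by apply: leq_trans (ltnW hNm); apply: leq_maxl.
  have hN1 : (N1 <= m)%N.
    by apply: leq_trans (ltnW hNm); apply: leq_trans (leq_maxr _ _); apply: leq_maxl.
  have hN2 : (N2 <= m)%N.
    apply: leq_trans (ltnW hNm); apply: leq_trans (leq_maxr _ _).
    by apply: leq_trans (leq_maxr _ _); apply: leq_maxl.
  have hmR : (0 < INR m)%R by lra.
  have hn : #|{: 'F_p * 'F_p}| = (p * p)%N by rewrite card_prod card_Fp.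
  have hmeps : (Rpower (INR m) eps <= INR p)%R.
    apply: (Rle_trans _ (Rpower x eps)); first by apply: Rle_Rpower_l; lra.
    rewrite /x Rpower_mult Rinv_l; last lra.
    rewrite Rpower_1; lra.
  have hpl : (INR p < Rpower (INR m + 1) eps)%R.
    have hx : (0 < x)%R by lra.
    have := @Rlt_Rpower_l x (INR m + 1) eps hepos (conj hx hm2).
    rewrite /x Rpower_mult Rinv_l; last lra.
    rewrite Rpower_1 //; lra.
  exists #|{: 'F_p * 'F_p}|, m.
  split => //; split.
    rewrite hn -multE mult_INR sqrt_square //; lra.
  move=> static dynamic Hk HB.
  have HBm : forall I, (size (static I) <= m.+1)%N.
    move=> I; have := HB I; rewrite hn -multE mult_INR => h.
    apply/leP; apply: INR_le; rewrite S_INR.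
    apply: Rle_trans h _.
    set a := Rpower (INR m + 1) eps in hpl *.
    have e1 : (INR m + 1 = a * a * Rpower (INR m + 1) (1 - 2 * eps))%R.
      rewrite /a -!Rpower_plus.
      replace (eps + eps + (1 - 2 * eps))%R with 1%R by ring.
      rewrite Rpower_1 //; lra.
    rewrite e1.
    have h2 : (Rpower (INR m) (1 - 2 * eps) <= Rpower (INR m + 1) (1 - 2 * eps))%R.
      by apply: Rle_Rpower_l; lra.
    have h3 : (0 <= Rpower (INR m) (1 - 2 * eps))%R.
      by rewrite /Rpower; apply: Rlt_le; apply: exp_pos.
    apply: Rmult_le_compat => //.
    - apply: Rmult_le_pos; lra.
    - apply: Rmult_le_compat; lra.
  have Hm : (m <= #|{: d.+1.-tuple 'F_p}|)%N.
    rewrite card_tuple card_Fp //. apply/leP; apply: INR_le; rewrite INR_expn.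
    rewrite -Rpower_pow; last lra.
    apply: Rle_trans hm1 _; apply: Rle_Rpower => //.
    rewrite S_INR; lra.
  have [c [Hcs Hcd]] := code_exists Hm.
  have [I [Q [Hcov Hopt]]] := core hk Hcs Hcd (HN2 m hN2) Hk HBm.
  exists I, Q.
  rewrite card_Fp // in Hopt.
  move: Hcov Hopt.
  set cov := coverage _ _ _; set opt := OPT _ _ _ => Hcov Hopt.
  have hcov : (INR cov <= INR k * INR d)%R.
    by rewrite -mult_INR; apply: le_INR; apply/leP; rewrite multE.
  have hopt : (INR p <= INR opt)%R by apply: le_INR; apply/leP.
  have hy := HN1 m hN1.
  have eq1 : Rpower (INR m) (eps - delta) = (Rpower (INR m) eps * / Rpower (INR m) delta)%R.
    by rewrite /Rminus Rpower_plus Rpower_Ropp.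
  rewrite eq1.
  set a := Rpower (INR m) eps in hmeps *.
  set y := Rpower (INR m) delta in hy *.
  have hd0 : (0 <= INR d)%R by apply: pos_INR.
  have hy0 : (0 < y)%R by nra.
  have ha : (0 <= a)%R by rewrite /a /Rpower; apply: Rlt_le; apply: exp_pos.
  have hc0 : (0 <= INR cov)%R by apply: pos_INR.
  apply: (Rle_lt_trans _ (C * INR p * INR d / y)).
    have e2 : (C * (a * / y) / (INR k * sqrt (INR k)) * INR cov
               = (C * a / y) * (INR cov / (INR k * sqrt (INR k))))%R.
      field; split; lra.
    rewrite e2.
    have h4 : (INR cov / (INR k * sqrt (INR k)) <= INR d)%R.
      apply: (Rmult_le_reg_r (INR k * sqrt (INR k))); first nra.
      have -> : (INR cov / (INR k * sqrt (INR k)) * (INR k * sqrt (INR k)) = INR cov)%R.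
        field; split; lra.
      nra.
    have h5 : (0 <= C * a / y)%R.
      apply: Rmult_le_pos; [nra | apply: Rlt_le; apply: Rinv_0_lt_compat; lra].
    apply: (Rle_trans _ (C * a / y * INR d)).
      by apply: Rmult_le_compat_l.
    have -> : (C * INR p * INR d / y = (C * INR p / y) * INR d)%R by field; lra.
    apply: Rmult_le_compat_r => //.
    rewrite /Rdiv; apply: Rmult_le_compat_r.
      by apply: Rlt_le; apply: Rinv_0_lt_compat.
    by apply: Rmult_le_compat_l; lra.
  apply: Rlt_le_trans hopt.
  have -> : (C * INR p * INR d / y = INR p * (C * INR d / y))%R by field; lra.
  have h6 : (C * INR d / y < 1)%R.
    apply: (Rmult_lt_reg_r y) => //.
    have -> : (C * INR d / y * y = C * INR d)%R by field; lra.
    lra.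
  nra.
- rewrite heq.
  have [N1 HN1] := big_pow C hd.
  pose m := (maxn M0 N1).+1.
  have hmR : (0 < INR m)%R by apply: lt_0_INR; apply/ltP.
  exists 1%N, m.
  split; first by apply: leq_trans (leqnSn _); apply: leq_maxl.
  split.
    rewrite Rpower_O // sqrt_1; lra.
  move=> static dynamic Hk HB.
  exists (fun _ => setT), setT.
  set I := (fun _ => setT) : set_system 1 m.
  set cov := coverage _ _ _; set opt := OPT _ _ _.
  have hle : (cov <= opt)%N.
    apply: (@leq_bigmax_cond _ (fun J : {set 'I_m} => #|J| <= k)%N (coverage I setT)).
    exact: Hk.
  have h1 : (1 <= opt)%N.
    have h1' : (#|[set (ord0 : 'I_m)]| <= k)%N by rewrite cards1.
    apply: leq_trans (@leq_bigmax_cond _ (fun J : {set 'I_m} => #|J| <= k)%N (coverage I setT) _ h1').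
    by rewrite /coverage big_set1 setIid cardsT card_ord.
  have hcov : (INR cov <= INR opt)%R by apply: le_INR; apply/leP.
  have hopt : (1 <= INR opt)%R by apply: (le_INR 1); apply/leP.
  have hy : (C < Rpower (INR m) delta)%R.
    apply: HN1; by apply: leq_trans (leqnSn _); apply: leq_maxr.
  have eq1 : Rpower (INR m) (0 - delta) = (/ Rpower (INR m) delta)%R.
    by rewrite Rminus_0_l Rpower_Ropp.
  rewrite eq1.
  set y := Rpower (INR m) delta in hy *.
  have hy0 : (0 < y)%R by lra.
  have hc0 : (0 <= INR cov)%R by apply: pos_INR.
  set R0 := (C * / y / (INR k * sqrt (INR k)))%R.
  have hR0 : (0 <= R0)%R.
    rewrite /R0 /Rdiv; apply: Rmult_le_pos; last by apply: Rlt_le; apply: Rinv_0_lt_compat; nra.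
    apply: Rmult_le_pos; [lra | apply: Rlt_le; apply: Rinv_0_lt_compat; lra].
  have hR1 : (R0 < 1)%R.
    rewrite /R0.
    apply: (Rmult_lt_reg_r (y * (INR k * sqrt (INR k)))).
      by apply: Rmult_lt_0_compat => //; apply: Rmult_lt_0_compat; lra.
    have -> : (C * / y / (INR k * sqrt (INR k)) * (y * (INR k * sqrt (INR k))) = C)%R.
      field; split; [nra | lra].
    have hks : (1 <= INR k * sqrt (INR k))%R.
      by rewrite -(Rmult_1_r 1); apply: Rmult_le_compat; lra.
    nra.
  nra.
Qed.
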